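(* Fix a countable collection of languages $\mathcal{L}$, $c\in(0,1]$ and $\rho\in(0,1]$. Under enumerations with constant noise rate $c$ and arbitrary omissions, there exists a set-based generator that generates in the limit from $\mathcal{L}$ and achieves set-based lower density $\rho$ if and only if the following holds: for every non-empty finite subcollection $\mathcal{L}'\subseteq\mathcal{L}$ and every enumeration $x_{1:\infty}$, either (a) there exists $L'\in\mathcal{L}'$ with $R(L';x_{1:n})>c$ for infinitely many $n$, or (b) every $L\in\mathcal{L}'$ satisfies $\mu_{\rm low}\big(\bigcap_{L''\in\mathcal{L}'}L'',\,L\big)\ge\rho$.
   Context: The universe is $U=\mathbb{N}$ with its natural order. A language is an infinite subset of $U$; a collection is a countable family of languages. For $A,B\subseteq\mathbb{N}$ with $B=\{b_1<b_2<\cdots\}$, $\mu_{\rm low}(A,B)=\liminf_n\frac1n|A\cap\{b_1,\dots,b_n\}|$. An enumeration is a sequence of distinct elements of $U$; $S_n=\{x_1,\dots,x_n\}$; the empirical noise rate is $R(L;x_{1:n})=\frac1n|\{t\le n:x_t\notin L\}|$. An enumeration of $K$ with $c$-noise and arbitrary omissions is a sequence in which every element of some infinite $\hat K\subseteq K$ appears exactly once and $R(\hat K;x_{1:n})\le c$ for all sufficiently large $n$. A set-based generator is a sequence of maps that, given $x_1,\dots,x_n$ (and knowledge of $\mathcal{L}$, not of $K$), outputs $A_n\subseteq U\setminus S_n$. It generates in the limit if for every $K\in\mathcal{L}$ and admissible enumeration of $K$ there is $n^\star$ with $A_n\subseteq K$ for all $n\ge n^\star$; it achieves set-based lower density $\rho$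 if $\liminf_n\mu_{\rm low}(A_n,K)\ge\rho$ for every such $K$ and enumeration. *)

(* Defs.v *)
From HB Require Import structures.
From mathcomp Require Import all_boot all_order all_algebra.
From mathcomp Require Import all_classical all_reals all_analysis.
Set Implicit Arguments. Unset Strict Implicit. Unset Printing Implicit Defensive.
Import Order.TTheory GRing.Theory Num.Theory.

(* Subsets of the universe U = nat are boolean predicates (no loss of
   generality classically).  Enumerations are indexed from 0:
   x 0 = x_1, ..., x (n-1) = x_n. *)

Definition infinite_lang (A : pred nat) : Prop :=
  forall m, exists n, (m <= n)%N /\ A n.

Definition enumeration (x : nat -> nat) : Prop := injective x.

Definition prefix (x : nat -> nat) (n : nat) : seq nat := map x (iota 0 n).

Section Defs.
Context {R : realType}.
Local Open Scope ring_scope.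

Definition noise_rate (L : pred nat) (x : nat -> nat) (n : nat) : R :=
  (count (fun t => ~~ L (x t)) (iota 0 n))%:R / n%:R.

(* The t-th element (0-based) in increasing order of B: the element b of B
   with exactly t elements of B below it (well defined when B is infinite). *)
Definition nth_elt (B : pred nat) (t : nat) : nat :=
  xget 0%N [set b | B b /\ count B (iota 0 b) = t].

Definition mu_low (A B : pred nat) : \bar R :=
  limn_einf (fun n : nat =>
    ((count (fun t => A (nth_elt B t)) (iota 0 n.+1))%:R / n.+1%:R : R)%:E).

Definition noisy_enum (c : R) (K : pred nat) (x : nat -> nat) : Prop :=
  enumeration x /\
  exists Khat : pred nat,
    [/\ (forall y, Khat y -> K y), infinite_lang Khat,
        (forall y, Khat y -> exists t, x t = y) &
        exists N, forall n, (N <= n)%N -> noise_rate Khat x n <= c].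

Definition set_generator (G : seq nat -> pred nat) : Prop :=
  forall s y, y \in s -> ~~ G s y.

Definition generates_in_limit (c : R) (Lang : nat -> pred nat)
  (G : seq nat -> pred nat) : Prop :=
  forall i x, noisy_enum c (Lang i) x ->
    exists nstar, forall n, (nstar <= n)%N ->
      forall y, G (prefix x n) y -> Lang i y.

Definition achieves_density (c rho : R) (Lang : nat -> pred nat)
  (G : seq nat -> pred nat) : Prop :=
  forall i x, noisy_enum c (Lang i) x ->
    (rho%:E <= limn_einf (fun n => mu_low (G (prefix x n)) (Lang i)))%E.

Definition inter_sub (Lang : nat -> pred nat) (F : seq nat) : pred nat :=
  fun y => all (fun i => Lang i y) F.

Definition density_condition (c rho : R) (Lang : nat -> pred nat) : Prop :=
  forall F : seq nat, F <> [::] ->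
  forall x : nat -> nat, enumeration x ->
    (exists2 i, i \in F &
       forall N, exists n, (N <= n)%N /\ c < noise_rate (Lang i) x n)
    \/
    (forall i, i \in F -> (rho%:E <= mu_low (inter_sub Lang F) (Lang i))%E).

End Defs.

(* Main.v *)
Require Import Defs.
From HB Require Import structures.
From mathcomp Require Import all_boot all_order all_algebra.
From mathcomp Require Import all_classical all_reals all_analysis.
From mathcomp Require Import lra zify.
Import Order.TTheory GRing.Theory Num.Theory.
Local Open Scope ring_scope.
Set Implicit Arguments. Unset Strict Implicit.

Lemma liminf_sup (R : realType) (u : (\bar R)^nat) :
  limn_einf u = ereal_sup (range (einfs u)).
Proof. by rewrite limn_einf_lim; apply/cvg_lim => //; exact: cvg_einfs_sup. Qed.

Lemma einfs_le (R : realType) (u : (\bar R)^nat) n k : (n <= k)%N -> (einfs u n <= u k)%E.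
Proof. by move=> nk; apply: ereal_inf_lbound; exists k. Qed.

Lemma ev_ge_liminf (R : realType) (u : (\bar R)^nat) N y :
  (forall k, (N <= k)%N -> (y <= u k)%E) -> (y <= limn_einf u)%E.
Proof.
move=> H; rewrite liminf_sup; apply: le_trans (ereal_sup_ubound _); last by exists N.
by apply: le_ereal_inf_tmp => _ [k hk <-]; apply: H.
Qed.

Lemma liminf_le_ev (R : realType) (u : (\bar R)^nat) N M :
  (forall k, (N <= k)%N -> (u k <= M)%E) -> (limn_einf u <= M)%E.
Proof.
move=> H; rewrite liminf_sup; apply: ge_ereal_sup => _ [n _ <-].
have := einfs_le u (leq_maxl n N).
move=> h; apply: (le_trans h); apply: H; exact: leq_maxr.
Qed.

Lemma liminf_le (R : realType) (u v : (\bar R)^nat) :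
  (forall k, (u k <= v k)%E) -> (limn_einf u <= limn_einf v)%E.
Proof.
move=> H; rewrite !liminf_sup; apply: ge_ereal_sup => _ [n _ <-].
apply: le_trans (ereal_sup_ubound _); last by exists n.
by apply: le_ereal_inf_tmp => _ [k hk <-]; apply: le_trans (einfs_le u hk) _.
Qed.

Lemma liminf_gt (R : realType) (u : (\bar R)^nat) y :
  (y < limn_einf u)%E -> exists N, forall k, (N <= k)%N -> (y < u k)%E.
Proof.
rewrite liminf_sup => /ereal_sup_gt [_ [N _ <-] HN].
by exists N => k hk; apply: lt_le_trans HN (einfs_le u hk).
Qed.

Lemma count_inj_mem (f : nat -> nat) (s : seq nat) m : injective f ->
  (count (fun t => f t \in s) (iota 0 m) <= size s)%N.
Proof.
move=> inj; rewrite -size_filter -(size_map f).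
apply: uniq_leq_size.
  by rewrite map_inj_uniq // filter_uniq // iota_uniq.
by move=> y /mapP [t]; rewrite mem_filter => /andP [h _] ->.
Qed.

Lemma countS (B : pred nat) b :
  count B (iota 0 b.+1) = (count B (iota 0 b) + B b)%N.
Proof. by rewrite -addn1 iotaD count_cat /= add0n addn0. Qed.

Lemma count_mono (B : pred nat) b b' : (b <= b')%N ->
  (count B (iota 0 b) <= count B (iota 0 b'))%N.
Proof. by move/subnKC <-; rewrite iotaD count_cat leq_addr. Qed.

Lemma nth_elt_spec (B : pred nat) : infinite_lang B -> forall t,
  B (nth_elt B t) /\ count B (iota 0 (nth_elt B t)) = t.
Proof.
move=> inf t; rewrite /nth_elt; apply: (xgetPex 0%N (P := [set b | B b /\ count B (iota 0 b) = t])).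
have unb : forall t, exists b, (t <= count B (iota 0 b))%N.
  elim=> [|k [b hb]]; first by exists 0%N.
  have [b' [hbb' Bb']] := inf b.
  exists b'.+1; rewrite countS Bb' /= addn1 ltnS.
  exact: leq_trans hb (count_mono B hbb').
have ex : exists b, (t < count B (iota 0 b))%N by apply: unb.
case: (ex_minnP ex) => b hb hmin.
case: b hb hmin => [|b1] hb hmin; first by [].
have h1 : (count B (iota 0 b1) <= t)%N.
  by rewrite leqNgt; apply/negP => /hmin; rewrite ltnn.
move: hb; rewrite countS; case Bb1: (B b1) => /=.
  rewrite addn1 ltnS => h2; exists b1; split => //.
  by apply/eqP; rewrite eqn_leq h1 h2.
by rewrite addn0 => h2; move: (leq_trans h2 h1); rewrite ltnn.
Qed.

Lemma nth_elt_inj (B : pred nat) : infinite_lang B -> injective (nth_elt B).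
Proof.
move=> inf t t' e.
by rewrite -(nth_elt_spec inf t).2 -(nth_elt_spec inf t').2 e.
Qed.
Lemma archi_n (R : realType) (a : R) : exists N, forall k, (N <= k)%N -> a < k%:R.
Proof.
exists (Num.truncn a).+1 => k hk; apply: lt_le_trans (truncnS_gt a) _.
by rewrite ler_nat.
Qed.

Lemma count_le3 (T : Type) (a b d : pred T) (l : seq T) :
  (forall y, (a y <= b y + d y)%N) -> (count a l <= count b l + count d l)%N.
Proof.
move=> H; elim: l => //= y l IH; rewrite addnACA; exact: leq_add.
Qed.

Lemma mu_low_remove (R : realType) (A B : pred nat) (s : seq nat) (r : R) :
  infinite_lang B -> (r%:E <= mu_low A B)%E ->
  (r%:E <= mu_low (fun y => (y \notin s) && A y) B)%E.
Proof.
move=> inf H; apply/lee_subgt0Pr => e e0.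
have H' : ((r - e / 2)%:E < mu_low A B)%E.
  by apply: lt_le_trans H; rewrite lte_fin; lra.
have [N1 HN1] := liminf_gt H'.
have [N2 HN2] := archi_n ((size s)%:R * 2 / e).
rewrite -EFinB; apply: (ev_ge_liminf (N := maxn N1 N2)) => k hk.
have hk1 : (N1 <= k)%N := leq_trans (leq_maxl N1 N2) hk.
have hk2 : (N2 <= k.+1)%N := leq_trans (leq_trans (leq_maxr N1 N2) hk) (leqnSn k).
move: (HN1 _ hk1) (HN2 _ hk2); rewrite lte_fin lee_fin.
set cA := count _ _; set cA' := count _ _.
have hc : (cA <= cA' + size s)%N.
  apply: (leq_trans (count_le3 (b := fun t => (nth_elt B t \notin s) && A (nth_elt B t)) (d := fun t => nth_elt B t \in s) (iota 0 k.+1) _)).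
    by move=> y /=; case: (_ \in s); case: (A _).
  by rewrite leq_add2l; apply: count_inj_mem; apply: nth_elt_inj.
have hc' : (cA%:R : R) <= cA'%:R + (size s)%:R by rewrite -natrD ler_nat.
have kpos : (0 : R) < k.+1%:R by rewrite ltr0n.
move=> h1 h2.
have h3 : (size s)%:R < e / 2 * k.+1%:R.
  by rewrite mulrC -ltr_pdivrMr ?divr_gt0 // invf_div mulrA.
have h4 : r - e / 2 < cA'%:R / k.+1%:R + (size s)%:R / k.+1%:R.
  apply: lt_le_trans h1 _; rewrite -mulrDl ler_wpM2r // invr_ge0 ltW //.
have h5 : (size s)%:R / k.+1%:R < e / 2 by rewrite ltr_pdivrMr.
have fin : forall a b : R, r - e / 2 < a + b -> b < e / 2 -> r - e <= a.
  by move=> a b; lra.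
exact: fin h4 h5.
Qed.

Lemma mu_low_mono (R : realType) (A A' B : pred nat) :
  (forall y, A y -> A' y) -> (@mu_low R A B <= @mu_low R A' B)%E.
Proof.
move=> H; apply: liminf_le => k; rewrite lee_fin ler_wpM2r ?invr_ge0 // ler_nat.
by apply: sub_count => t; apply: H.
Qed.

Lemma ev_all (T : eqType) (F : seq T) (Q : T -> nat -> Prop) :
  (forall j, j \in F -> exists N, forall n, (N <= n)%N -> Q j n) ->
  exists N, forall j, j \in F -> forall n, (N <= n)%N -> Q j n.
Proof.
elim: F => [|a F IH] H; first by exists 0%N.
have [Na HNa] := H a (mem_head _ _).
have HF : forall j, j \in F -> exists N, forall n, (N <= n)%N -> Q j n.
  by move=> j hj; apply: H; rewrite inE hj orbT.
have [NF HNF] := IH HF.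
exists (maxn Na NF) => j; rewrite inE => /orP [/eqP -> | hj] n hn.
  by apply: HNa; apply: leq_trans hn; apply: leq_maxl.
by apply: HNF => //; apply: leq_trans hn; apply: leq_maxr.
Qed.

Lemma noise_le_one (R : realType) L x n : @noise_rate R L x n <= 1.
Proof.
rewrite /noise_rate; case: n => [|n]; first by rewrite invr0 mulr0.
rewrite ler_pdivrMr ?ltr0n // mul1r ler_nat.
by apply: leq_trans (count_size _ _) _; rewrite size_iota.
Qed.

Lemma noise_sub (R : realType) (K Khat : pred nat) x n :
  (forall y, Khat y -> K y) -> @noise_rate R K x n <= @noise_rate R Khat x n.
Proof.
move=> H; rewrite /noise_rate ler_wpM2r ?invr_ge0 // ler_nat.
apply: sub_count => t /=; apply: contra; exact: H.
Qed.

Lemma nth_prefix x n t : (t < n)%N -> nth 0%N (Defs.prefix x n) t = x t.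
Proof.
move=> h; rewrite /Defs.prefix (nth_map 0%N) ?size_iota // nth_iota //.
Qed.

Lemma noise_prefix (R : realType) L x n m : (m <= n)%N ->
  @noise_rate R L (fun t => nth 0%N (Defs.prefix x n) t) m = @noise_rate R L x m.
Proof.
move=> h; rewrite /noise_rate; congr (_%:R / _).
apply: eq_in_count => t; rewrite mem_iota add0n => /andP [_ ht].
by rewrite nth_prefix //; apply: leq_trans ht h.
Qed.

Lemma enum_exists (R : realType) (Lang : nat -> pred nat) (c : R) (F : seq nat) x :
  (forall i, infinite_lang (Lang i)) -> 0 < c <= 1 -> injective x ->
  (forall j, j \in F -> exists N, forall n, (N <= n)%N -> noise_rate (Lang j) x n <= c) ->
  exists z, forall j, j \in F -> noisy_enum c (Lang j) z.
Proof.
move=> inf /andP [c0 c1] inj H.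
have [ceq|clt] := eqVneq c 1.
  exists id => j _; split; first by move=> a b.
  exists (Lang j); split; [by [] | exact: inf | by move=> y; exists y | ].
  by exists 0%N => n _; rewrite ceq; exact: noise_le_one.
have c1' : c < 1 by rewrite lt_neqAle clt c1.
exists x => j hj; split => //.
have [Nj HNj] := H j hj.
set Khat := fun y => Lang j y && `[< exists t, x t = y >].
have eqn : forall n, @noise_rate R Khat x n = @noise_rate R (Lang j) x n.
  move=> n; rewrite /noise_rate; congr (_%:R / _); apply: eq_count => t.
  by rewrite /Khat /= (asboolT (ex_intro (fun u => x u = x t) t erefl)) andbT.
exists Khat; split.
- by move=> y /andP [].
- apply: contrapT => hinf.
  have [m0 hm0] : exists m0, forall y, Khat y -> (y < m0)%N.
    apply: contrapT => hn; apply: hinf => m.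
    apply: contrapT => hm; apply: hn; exists m => y ky.
    rewrite ltnNge; apply/negP => my; apply: hm; by exists y.
  have [N2 HN2] := archi_n ((m0%:R : R) / (1 - c)).
  set n := maxn Nj N2.
  have h1 := HNj n (leq_maxl _ _).
  have h2 := HN2 n (leq_maxr _ _).
  rewrite -eqn /noise_rate in h1.
  set cnt := count _ _ in h1.
  have hc : (n <= cnt + m0)%N.
    have hp : forall y, (predT y <= ~~ Khat (x y) + (x y \in iota 0 m0))%N.
      move=> y /=; case ky: (Khat (x y)) => //=.
      by rewrite mem_iota add0n (hm0 _ ky).
    have h := count_le3 (iota 0 n) hp.
    rewrite count_predT size_iota in h.
    apply: leq_trans h _.
    by rewrite leq_add2l -{2}(size_iota 0 m0); apply: count_inj_mem.
  have hc' : (n%:R : R) <= cnt%:R + m0%:R by rewrite -natrD ler_nat.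
  have npos : (0 : R) < n%:R.
    apply: le_lt_trans h2; rewrite divr_ge0 // subr_ge0 //.
  rewrite ler_pdivrMr // in h1.
  rewrite ltr_pdivrMr ?subr_gt0 // in h2.
  have fin : forall (a b d : R), a <= b + d -> b <= c * a -> d < a * (1 - c) -> False.
    by move=> a b d; lra.
  exact: fin hc' h1 h2.
- by move=> y /andP [_ /asboolP].
- by exists Nj => n hn; rewrite eqn; apply: HNj.
Qed.

Lemma necessity (R : realType) (Lang : nat -> pred nat) (c rho : R) :
  (forall i, infinite_lang (Lang i)) -> 0 < c <= 1 ->
  (exists G : seq nat -> pred nat,
      [/\ set_generator G, generates_in_limit c Lang G &
          achieves_density c rho Lang G]) ->
  density_condition c rho Lang.
Proof.
move=> inf hc [G [gen lim dens]] F F0 x inj.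
case: (pselect (exists2 i, i \in F &
   forall N, exists n, (N <= n)%N /\ c < noise_rate (Lang i) x n)) => [h|h]; first by left.
right.
have hev : forall j, j \in F -> exists N, forall n, (N <= n)%N -> noise_rate (Lang j) x n <= c.
  move=> j hj; apply: contrapT => hn; apply: h; exists j => // N.
  apply: contrapT => hN; apply: hn; exists N => n hn.
  rewrite leNgt; apply/negP => hc'; apply: hN; by exists n.
have [z hz] := enum_exists inf hc inj hev.
have hlim : forall j, j \in F -> exists N, forall n, (N <= n)%N ->
    forall y, G (Defs.prefix z n) y -> Lang j y.
  by move=> j hj; apply: lim; apply: hz.
have [Ns HNs] := ev_all hlim.
move=> i hi.
apply: le_trans (dens i z (hz i hi)) _.
apply: (liminf_le_ev (N := Ns)) => k hk.
apply: mu_low_mono => y hy; apply/allP => j hj.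
exact: HNs j hj k hk y hy.
Qed.

Definition xs (s : seq nat) : nat -> nat := fun t => nth 0%N s t.

Definition Pset (R : realType) (Lang : nat -> pred nat) (c : R) (s : seq nat) (t : nat) : seq nat :=
  [seq i <- iota 0 t.+1 |
    all (fun m => noise_rate (Lang i) (xs s) m <= c) (iota t.+1 (size s - t))].

Definition goodb (R : realType) (Lang : nat -> pred nat) (rho : R) (F : seq nat) : bool :=
  `[< forall i, i \in F -> (rho%:E <= @mu_low R (inter_sub Lang F) (Lang i))%E >].

Definition tsel (R : realType) (Lang : nat -> pred nat) (c rho : R) (s : seq nat) : nat :=
  \big[maxn/0%N]_(t < (size s).+1 | goodb Lang rho (Pset Lang c s t)) (t : nat).

Definition Gen (R : realType) (Lang : nat -> pred nat) (c rho : R) : seq nat -> pred nat :=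
  fun s y => (y \notin s) && inter_sub Lang (Pset Lang c s (tsel Lang c rho s)) y.

Lemma size_prefix x n : size (Defs.prefix x n) = n.
Proof. by rewrite /Defs.prefix size_map size_iota. Qed.

Lemma core (R : realType) (Lang : nat -> pred nat) (c rho : R) i x :
  density_condition c rho Lang -> noisy_enum c (Lang i) x ->
  exists n1, forall n, (n1 <= n)%N ->
    i \in Pset Lang c (Defs.prefix x n) (tsel Lang c rho (Defs.prefix x n)) /\
    goodb Lang rho (Pset Lang c (Defs.prefix x n) (tsel Lang c rho (Defs.prefix x n))).
Proof.
move=> dc [inj [Khat [sub _ _ [N HN]]]].
have hK : forall m, (N <= m)%N -> noise_rate (Lang i) x m <= c.
  by move=> m hm; apply: le_trans (HN m hm); apply: noise_sub.
set k := maxn N i.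
pose good j := `[< forall m, (k < m)%N -> noise_rate (Lang j) x m <= c >].
have hQ : forall j, j \in iota 0 k.+1 -> exists Nj, forall n, (Nj <= n)%N ->
    all (fun m => noise_rate (Lang j) x m <= c) (iota k.+1 (n - k)) = good j.
  move=> j _; case: (pselect (forall m, (k < m)%N -> noise_rate (Lang j) x m <= c)) => hj.
    exists 0%N => n _; rewrite /good (asboolT hj); apply/allP => m.
    by rewrite mem_iota => /andP [hm _]; apply: hj.
  have [m [hm hbad]] : exists m, (k < m)%N /\ c < noise_rate (Lang j) x m.
    apply: contrapT => hn; apply: hj => m hm; rewrite leNgt; apply/negP => hb.
    by apply: hn; exists m.
  exists m => n hn; rewrite /good (asboolF hj); apply/negbTE/allPn; exists m.
    by rewrite mem_iota; apply/andP; split; lia.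
  by rewrite -ltNge.
have [n0 Hn0] := ev_all hQ.
set Pinf := [seq j <- iota 0 k.+1 | good j].
have iP : i \in Pinf.
  rewrite mem_filter mem_iota /= ltnS leq_maxr andbT /good; apply/asboolP => m hm.
  by apply: hK; apply: ltnW; apply: leq_ltn_trans hm; apply: leq_maxl.
have gP : goodb Lang rho Pinf.
  apply/asboolP.
  have F0 : Pinf <> [::] by move=> e; rewrite e in iP.
  case: (dc Pinf F0 x inj) => // [[j hj hinf]].
  exfalso; have [n [hn hbad]] := hinf k.+1.
  move: hj; rewrite mem_filter => /andP [/asboolP hg _].
  by move: (hg n hn); rewrite leNgt hbad.
exists (maxn n0 k.+1) => n hn.
have hn0 : (n0 <= n)%N := leq_trans (leq_maxl _ _) hn.
have hnk : (k < n)%N := leq_trans (leq_maxr _ _) hn.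
set s := Defs.prefix x n.
have Pk : Pset Lang c s k = Pinf.
  rewrite /Pset /Pinf; apply: eq_in_filter => j hj.
  rewrite size_prefix -(Hn0 j hj n hn0).
  apply: eq_in_all => m; rewrite mem_iota => /andP [h1 h2]; have hm : (m <= n)%N by lia.
  by rewrite /xs noise_prefix.
have gk : goodb Lang rho (Pset Lang c s k) by rewrite Pk.
have kord : (k < (size s).+1)%N by rewrite size_prefix ltnS ltnW.
have [t0 [gt0 kt ->]] : exists t0 : 'I_(size s).+1,
    [/\ goodb Lang rho (Pset Lang c s t0), (k <= t0)%N & tsel Lang c rho s = t0].
  rewrite /tsel (bigop.bigmax_eq_arg (Ordinal kord)) //; case: arg_maxnP => //= t0 Pt0 maxt0.
  by exists t0; split => //; exact: (maxt0 (Ordinal kord) gk).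
split => //.
rewrite mem_filter mem_iota /= ltnS.
have -> : (i <= t0)%N by apply: leq_trans kt; apply: leq_maxr.
rewrite andbT; apply/allP => m; rewrite mem_iota => /andP [hm1 hm2].
have mn : (m <= n)%N.
  have e : size s = n := size_prefix x n.
  have ht := ltn_ord t0; lia.
rewrite /xs noise_prefix //; apply: hK.
have := leq_maxl N i; rewrite -/k; lia.
Qed.

Lemma sufficiency (R : realType) (Lang : nat -> pred nat) (c rho : R) :
  (forall i, infinite_lang (Lang i)) -> density_condition c rho Lang ->
  exists G : seq nat -> pred nat,
      [/\ set_generator G, generates_in_limit c Lang G &
          achieves_density c rho Lang G].
Proof.
move=> inf dc; exists (Gen Lang c rho); split.
- by move=> s y ys; rewrite /Gen ys.
- move=> i x adm; have [n1 Hn1] := core dc adm.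
  exists n1 => n hn y /andP [_ hy].
  have [iP _] := Hn1 n hn.
  by move/allP: hy; apply.
- move=> i x adm; have [n1 Hn1] := core dc adm.
  apply: (ev_ge_liminf (N := n1)) => n hn.
  have [iP /asboolP gP] := Hn1 n hn.
  apply: mu_low_remove; first exact: inf.
  exact: gP.
Qed.

Unset Implicit Arguments. Set Strict Implicit.

Theorem theorem6p14 (R : realType) (Lang : nat -> pred nat) (c rho : R) :
  (forall i, infinite_lang (Lang i)) ->
  0 < c <= 1 -> 0 < rho <= 1 ->
  (exists G : seq nat -> pred nat,
      [/\ set_generator G, generates_in_limit c Lang G &
          achieves_density c rho Lang G])
  <-> density_condition c rho Lang.
Proof.
move=> inf hc _; split; first exact: necessity.
exact: sufficiency.
Qed.
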